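(* For each $t\in\{0,1,\dots,T-1\}$ and $i\in\{1,\dots,N\}$, the control limits satisfy $\lim_{k\to\infty}\delta_i^{(k,t)}=\xi_i$; that is, for all sufficiently large $k$, replacement is not optimal in any state $(x,k)$ with $x<\xi_i$ at epoch $t$.
   Context: Fix integers $N\ge1$, $T\ge1$, reals $\alpha_0,\beta_0>0$, and for each $i\in\{1,\dots,N\}$ an integer failure threshold $\xi_i\ge1$ and costs $0<c_p^i<c_u^i$. $\mathbb{N}_0=\{0,1,2,\dots\}$. For real $r>0$ and $p\in(0,1)$, $NB(r,p)$ is the distribution on $\mathbb{N}_0$ with $P(n)=\frac{\Gamma(n+r)}{\Gamma(r)n!}p^r(1-p)^n$; $NB(0,p)$ is the point mass at $0$. For $t\in\{0,\dots,T\}$ let $p_t=\frac{\beta_0+Nt}{\beta_0+Nt+1}$. Let $\mathbb{I}_i(x)=1$ if $x\ge\xi_i$, else $0$; $\mathcal{A}_i(x)=\{0,1\}$ if $x<\xi_i$ and $\{1\}$ if $x\ge\xi_i$ ($a=1$: replacement, $a=0$: no action); $C_i(x,a)=a(1-\mathbb{I}_i(x))c_p^i+\mathbb{I}_i(x)c_u^i$. Define $\tilde V^{N,i}_T(x,k)=\mathbb{I}_i(x)c_u^i$ and for $t=T-1,\dots,0$: $\tilde V^{N,i}_t(x,k)=\min_{a\in\mathcal{A}_i(x)}\{C_i(x,a)+\mathbb{E}[\tilde V^{N,i}_{t+1}(x(1-a)+Z,\;k+Z+K)]\}$, where $Z\sim NB(\alpha_0+k,p_t)$ and $K\sim NB((N-1)(\alpha_0+k),p_t)$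 are independent. An action is optimal if it attains this minimum. The control limit $\delta_i^{(k,t)}\in\{1,\dots,\xi_i\}$ is the (unique) integer such that, for every $x\in\mathbb{N}_0$, the action $a=1$ is optimal in state $(x,k)$ at epoch $t$ iff $x\ge\delta_i^{(k,t)}$ (its existence is a result of the paper). *)

(* Defs.v *)
From Stdlib Require Import Reals Arith.
From Coquelicot Require Import Coquelicot.
Open Scope R_scope.

(* rising factorial r (r+1) ... (r+n-1) = Gamma(n+r)/Gamma(r) for r > 0 *)
Fixpoint rising (r : R) (n : nat) : R :=
  match n with
  | O => 1
  | S m => rising r m * (r + INR m)
  end.

(* pmf of NB(r,p) on N_0: Gamma(n+r)/(Gamma(r) n!) p^r (1-p)^n.
   For r = 0 this is the point mass at 0 (rising 0 n = 0 for n >= 1). *)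
Definition nb_pmf (r p : R) (n : nat) : R :=
  rising r n / INR (Factorial.fact n) * Rpower p r * (1 - p) ^ n.

(* E[f(Z,K)] for independent Z ~ NB(r1,p), K ~ NB(r2,p). *)
Definition nb_expect (r1 r2 p : R) (f : nat -> nat -> R) : R :=
  Series (fun z => Series (fun j => nb_pmf r1 p z * nb_pmf r2 p j * f z j)).

Definition p_t (N : nat) (b0 : R) (t : nat) : R :=
  (b0 + INR N * INR t) / (b0 + INR N * INR t + 1).

Definition ind (xi x : nat) : R := if (xi <=? x)%nat then 1 else 0.

(* a = true : replacement (a=1), a = false : no action (a=0) *)
Definition aR (a : bool) : R := if a then 1 else 0.

Definition admissible (xi x : nat) (a : bool) : Prop := a = true \/ (x < xi)%nat.

Definition cost (xi : nat) (cp cu : R) (x : nat) (a : bool) : R :=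
  aR a * (1 - ind xi x) * cp + ind xi x * cu.

Definition qval (N : nat) (a0 b0 : R) (xi : nat) (cp cu : R)
    (Vnext : nat -> nat -> R) (t x k : nat) (a : bool) : R :=
  cost xi cp cu x a +
  nb_expect (a0 + INR k) (INR (N - 1) * (a0 + INR k)) (p_t N b0 t)
    (fun z j => Vnext (if a then z else (x + z)%nat) (k + z + j)%nat).

(* value function indexed by the number r of remaining epochs: epoch T - r *)
Fixpoint Vrem (N T : nat) (a0 b0 : R) (xi : nat) (cp cu : R) (r : nat)
    (x k : nat) : R :=
  match r with
  | O => ind xi x * cu
  | S r' =>
      let q := qval N a0 b0 xi cp cu (Vrem N T a0 b0 xi cp cu r') (T - S r') x k in
      if (xi <=? x)%nat then q true else Rmin (q false) (q true)
  end.

Definition Vt (N T : nat) (a0 b0 : R) (xi : nat) (cp cu : R) (t x k : nat) : R :=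
  Vrem N T a0 b0 xi cp cu (T - t) x k.

Definition optimal (N T : nat) (a0 b0 : R) (xi : nat) (cp cu : R)
    (t x k : nat) (a : bool) : Prop :=
  admissible xi x a /\
  forall b, admissible xi x b ->
    qval N a0 b0 xi cp cu (Vt N T a0 b0 xi cp cu (t + 1)) t x k a <=
    qval N a0 b0 xi cp cu (Vt N T a0 b0 xi cp cu (t + 1)) t x k b.

(* Main.v *)
Require Import Defs.
From Stdlib Require Import Reals ZArith Lra Lia.
From Coquelicot Require Import Coquelicot.
Open Scope R_scope.

Lemma rising_nonneg r n : 0 <= r -> 0 <= rising r n.
Proof. intros Hr; induction n; simpl. lra. apply Rmult_le_pos; auto. pose proof (pos_INR n); lra. Qed.

Lemma rising_pos r n : 0 < r -> 0 < rising r n.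
Proof. intros Hr; induction n; simpl. lra. apply Rmult_lt_0_compat; auto. pose proof (pos_INR n); lra. Qed.

Lemma rising_mono r s n : 0 <= r -> r <= s -> rising r n <= rising s n.
Proof. intros Hr Hs; induction n; simpl. lra.
  apply Rmult_le_compat; auto. apply rising_nonneg; auto. pose proof (pos_INR n); lra. lra. Qed.

Lemma rising_shift r j : rising r (S j) = r * rising (r+1) j.
Proof. induction j. simpl. ring. change (rising r (S (S j))) with (rising r (S j) * (r + INR (S j))).
  rewrite IHj. change (rising (r+1) (S j)) with (rising (r+1) j * (r+1+INR j)). rewrite S_INR. ring. Qed.

Definition cc r j := rising r j / INR (fact j).

Lemma fact_pos j : 0 < INR (fact j).
Proof. apply lt_0_INR. apply lt_O_fact. Qed.

Lemma cc_nonneg r j : 0 <= r -> 0 <= cc r j.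
Proof. intros; unfold cc. apply Rmult_le_pos. apply rising_nonneg; auto.
  apply Rlt_le, Rinv_0_lt_compat, fact_pos. Qed.

Lemma cc_rec r j : cc (r+1) (S j) = cc (r+1) j + cc r (S j).
Proof. unfold cc. rewrite (rising_shift r j). change (rising (r+1) (S j)) with (rising (r+1) j * (r + 1 + INR j)).
  change (fact (S j)) with (S j * fact j)%nat. rewrite mult_INR, S_INR.
  pose proof (fact_pos j); pose proof (pos_INR j). field. lra. Qed.

Lemma cc_0 r : cc r 0 = 1.
Proof. unfold cc; simpl. lra. Qed.

Lemma cc_zero j : cc 0 (S j) = 0.
Proof. unfold cc. rewrite rising_shift. unfold Rdiv; ring. Qed.

Definition PP r q n := sum_f_R0 (fun j => cc r j * q ^ j) n.

Lemma PP_id r q n : (1 - q) * PP (r+1) q n + cc (r+1) n * q ^ (S n) = PP r q n.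
Proof. unfold PP. induction n; simpl.
  - rewrite !cc_0. ring.
  - rewrite cc_rec. rewrite <- IHn. simpl. ring. Qed.

Lemma PP_step r q n : 0 <= r -> 0 <= q -> (1 - q) * PP (r+1) q n <= PP r q n.
Proof. intros. rewrite <- (PP_id r q n). pose proof (cc_nonneg (r+1) n ltac:(lra)).
  pose proof (pow_le q (S n) H0). pose proof (Rmult_le_pos _ _ H1 H2). lra. Qed.

Lemma PP_zero q n : PP 0 q n = 1.
Proof. unfold PP. induction n; simpl. rewrite cc_0; ring. rewrite IHn, cc_zero. ring. Qed.

Lemma PP_nat m q n : 0 <= q < 1 -> (1 - q) ^ m * PP (INR m) q n <= 1.
Proof. intros Hq. induction m.
  - simpl. rewrite PP_zero. lra.
  - rewrite S_INR. simpl.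
    pose proof (PP_step (INR m) q n (pos_INR m) ltac:(lra)).
    pose proof (pow_le (1-q) m ltac:(lra)).
    apply Rle_trans with ((1-q)^m * PP (INR m) q n); auto.
    replace ((1 - q) * (1 - q) ^ m * PP (INR m + 1) q n) with ((1 - q) ^ m * ((1-q) * PP (INR m + 1) q n)) by ring. apply Rmult_le_compat_l; auto. Qed.

Lemma PP_mono r s q n : 0 <= r -> r <= s -> 0 <= q -> PP r q n <= PP s q n.
Proof. intros. unfold PP. apply sum_Rle. intros. apply Rmult_le_compat_r. apply pow_le; auto.
  unfold cc. apply Rmult_le_compat_r. apply Rlt_le, Rinv_0_lt_compat, fact_pos. apply rising_mono; auto. Qed.

Lemma nb_pmf_eq r p n : nb_pmf r p n = Rpower p r * (cc r n * (1-p)^n).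
Proof. unfold nb_pmf, cc. ring. Qed.

Lemma nb_pmf_nonneg r p n : 0 <= r -> 0 < p -> p < 1 -> 0 <= nb_pmf r p n.
Proof. intros. rewrite nb_pmf_eq. apply Rmult_le_pos. unfold Rpower; apply Rlt_le, exp_pos.
  apply Rmult_le_pos. apply cc_nonneg; auto. apply pow_le; lra. Qed.

Lemma nb_sum_bound r p n : 0 <= r -> 0 < p -> p < 1 -> sum_f_R0 (nb_pmf r p) n <= / p.
Proof. intros Hr Hp Hp1.
  assert (Hs : sum_f_R0 (nb_pmf r p) n = Rpower p r * PP r (1-p) n).
  { unfold PP. rewrite scal_sum. apply sum_eq. intros. rewrite nb_pmf_eq. ring. }
  rewrite Hs.
  destruct (archimed r) as [H1 H2].
  assert (Hz : (0 <= up r)%Z). { apply le_IZR. lra. }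
  set (m := Z.to_nat (up r)).
  assert (Hm : INR m = IZR (up r)). { unfold m. rewrite INR_IZR_INZ, Z2Nat.id; auto. }
  pose proof (PP_mono r (INR m) (1-p) n Hr ltac:(lra) ltac:(lra)).
  pose proof (PP_nat m (1-p) n ltac:(lra)).
  replace (1 - (1-p)) with p in H0 by ring.
  assert (Hpm : 0 < p ^ m) by (apply pow_lt; lra).
  assert (HR : Rpower p r <= p ^ m / p).
  { assert (E : p ^ m / p = Rpower p (INR m + - (1))).
    { rewrite Rpower_plus, Rpower_Ropp, Rpower_1, Rpower_pow by lra. reflexivity. }
    rewrite E. unfold Rpower. assert (ln p < 0). { rewrite <- ln_1. apply ln_increasing; lra. }
    assert (Hle : r * ln p <= (INR m + - (1)) * ln p) by nra.
    destruct Hle as [Hlt|Heq]. left; apply exp_increasing; auto. rewrite Heq; lra. }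
  assert (HP : 0 <= PP r (1-p) n). { unfold PP. apply cond_pos_sum. intros. apply Rmult_le_pos. apply cc_nonneg; auto. apply pow_le; lra. }
  apply Rle_trans with (p ^ m / p * PP (INR m) (1-p) n).
  apply Rmult_le_compat; auto. unfold Rpower; apply Rlt_le, exp_pos.
  unfold Rdiv. rewrite Rmult_comm, <- Rmult_assoc. 
  rewrite <- (Rmult_1_l (/p)) at 2. apply Rmult_le_compat_r. apply Rlt_le, Rinv_0_lt_compat; lra.
  rewrite Rmult_comm; auto.
Qed.

Lemma series_bound (a : nat -> R) M : (forall n, 0 <= a n) -> (forall n, sum_f_R0 a n <= M) ->
  ex_series a /\ 0 <= Series a /\ Series a <= M.
Proof. intros Ha HM.
  assert (Hinc : forall n, sum_n a n <= sum_n a (S n)).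
  { intros n. rewrite !sum_n_Reals. simpl. specialize (Ha (S n)). lra. }
  assert (HM' : forall n, sum_n a n <= M). { intros n; rewrite sum_n_Reals; auto. }
  destruct (ex_finite_lim_seq_incr _ _ Hinc HM') as [l Hl].
  assert (HS : Series a = l). { unfold Series. rewrite (is_lim_seq_unique _ _ Hl). reflexivity. }
  split. exists l. exact Hl. rewrite HS. split.
  - assert (H := is_lim_seq_le (fun _ => 0) (sum_n a) 0 l). simpl in H. apply H; auto.
    intros n; rewrite sum_n_Reals. apply cond_pos_sum; auto. apply is_lim_seq_const.
  - assert (H := is_lim_seq_le (sum_n a) (fun _ => M) l M). simpl in H. apply H; auto. apply is_lim_seq_const.
Qed.

Definition ginner (r1 r2 p : R) (f : nat -> nat -> R) (z : nat) : R :=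
  Series (fun j => nb_pmf r1 p z * nb_pmf r2 p j * f z j).

Lemma ginner_bound r1 r2 p f B z : 0 <= r1 -> 0 <= r2 -> 0 < p -> p < 1 ->
  (forall z j, 0 <= f z j <= B) ->
  ex_series (fun j => nb_pmf r1 p z * nb_pmf r2 p j * f z j) /\
  0 <= ginner r1 r2 p f z <= nb_pmf r1 p z * (B / p).
Proof. intros H1 H2 Hp Hp1 Hf. unfold ginner.
  pose proof (nb_pmf_nonneg r1 p z H1 Hp Hp1) as P1.
  assert (HB : 0 <= B). { destruct (Hf O O); lra. }
  destruct (series_bound (fun j => nb_pmf r1 p z * nb_pmf r2 p j * f z j) (nb_pmf r1 p z * (B / p))) as [E [L U]].
  - intros j. pose proof (nb_pmf_nonneg r2 p j H2 Hp Hp1). destruct (Hf z j). apply Rmult_le_pos; [apply Rmult_le_pos|]; auto.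
  - intros n. apply Rle_trans with (sum_f_R0 (fun j => nb_pmf r2 p j * (nb_pmf r1 p z * B)) n).
    + apply sum_Rle. intros j _. pose proof (nb_pmf_nonneg r2 p j H2 Hp Hp1). destruct (Hf z j).
      replace (nb_pmf r2 p j * (nb_pmf r1 p z * B)) with (nb_pmf r1 p z * nb_pmf r2 p j * B) by ring.
      apply Rmult_le_compat_l; auto. apply Rmult_le_pos; auto.
    + rewrite <- scal_sum. unfold Rdiv. rewrite Rmult_assoc. apply Rmult_le_compat_l; auto.
      apply Rmult_le_compat_l; auto. apply nb_sum_bound; auto.
  - auto.
Qed.

Lemma expect_bound r1 r2 p f B : 0 <= r1 -> 0 <= r2 -> 0 < p -> p < 1 ->
  (forall z j, 0 <= f z j <= B) ->
  ex_series (ginner r1 r2 p f) /\ 0 <= nb_expect r1 r2 p f <= B / (p * p).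
Proof. intros H1 H2 Hp Hp1 Hf.
  assert (HB : 0 <= B). { destruct (Hf O O); lra. }
  destruct (series_bound (ginner r1 r2 p f) (B / (p * p))) as [E [L U]].
  - intros z. apply (ginner_bound r1 r2 p f B z); auto.
  - intros n. apply Rle_trans with (sum_f_R0 (fun z => nb_pmf r1 p z * (B / p)) n).
    + apply sum_Rle. intros z _. apply (ginner_bound r1 r2 p f B z); auto.
    + rewrite <- scal_sum. replace (B / (p*p)) with (B / p * / p) by (field; lra).
      apply Rmult_le_compat_l. unfold Rdiv; apply Rmult_le_pos; auto. apply Rlt_le, Rinv_0_lt_compat; lra.
      apply nb_sum_bound; auto.
  - split; auto.
Qed.

Lemma p_t_bounds N b0 t : 0 < b0 -> 0 < b0 / (b0 + 1) <= p_t N b0 t /\ p_t N b0 t < 1.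
Proof. intros Hb. unfold p_t. pose proof (pos_INR N); pose proof (pos_INR t).
  assert (0 <= INR N * INR t) by (apply Rmult_le_pos; auto).
  set (s := b0 + INR N * INR t). assert (b0 <= s) by (unfold s; lra).
  split; [split|].
  - apply Rdiv_lt_0_compat; lra.
  - apply (Rmult_le_reg_r ((b0+1)*(s+1))). nra.
    replace (b0 / (b0 + 1) * ((b0 + 1) * (s + 1))) with (b0 * (s+1)) by (field; lra).
    replace (s / (s + 1) * ((b0 + 1) * (s + 1))) with (s * (b0+1)) by (field; lra). nra.
  - apply (Rmult_lt_reg_r (s+1)). lra. replace (s / (s + 1) * (s + 1)) with s by (field; lra). lra.
Qed.

Fixpoint Bd (cp cu pm : R) (r : nat) : R :=
  match r with O => cu | S r' => cp + cu + Bd cp cu pm r' / (pm * pm) end.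

Lemma Bd_nonneg cp cu pm r : 0 < cp -> 0 < cu -> 0 < pm -> 0 <= Bd cp cu pm r.
Proof. intros. induction r; simpl. lra. assert (0 <= Bd cp cu pm r / (pm*pm)).
  unfold Rdiv; apply Rmult_le_pos; auto. apply Rlt_le, Rinv_0_lt_compat; nra. lra. Qed.

Lemma cost_bound xi cp cu x a : 0 < cp -> 0 < cu -> 0 <= cost xi cp cu x a <= cp + cu.
Proof. intros. unfold cost, Defs.ind, aR. destruct a; destruct (xi <=? x)%nat; split; lra. Qed.

Lemma V_bound N T a0 b0 xi cp cu r : 0 <= a0 -> 0 < b0 -> 0 < cp -> 0 < cu ->
  forall x k, 0 <= Vrem N T a0 b0 xi cp cu r x k <= Bd cp cu (b0/(b0+1)) r.
Proof. intros Ha Hb Hcp Hcu. set (pm := b0/(b0+1)). induction r; intros x k.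
  - simpl. unfold Defs.ind. destruct (xi <=? x)%nat; lra.
  - assert (Hq : forall a, 0 <= qval N a0 b0 xi cp cu (Vrem N T a0 b0 xi cp cu r) (T - S r) x k a
                    <= Bd cp cu pm (S r)).
    { intros a. unfold qval. destruct (p_t_bounds N b0 (T - S r) Hb) as [[Hpm Hpp] Hp1].
      fold pm in Hpm, Hpp.
      pose proof (pos_INR k). pose proof (pos_INR (N-1)).
      destruct (expect_bound (a0 + INR k) (INR (N - 1) * (a0 + INR k)) (p_t N b0 (T - S r))
        (fun z j => Vrem N T a0 b0 xi cp cu r (if a then z else (x + z)%nat) (k + z + j)%nat)
        (Bd cp cu pm r)) as [_ [E1 E2]]; try lra.
      apply Rmult_le_pos; lra. intros; apply IHr.
      pose proof (cost_bound xi cp cu x a Hcp Hcu).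
      pose proof (Bd_nonneg cp cu pm r Hcp Hcu Hpm).
      assert (Bd cp cu pm r / (p_t N b0 (T - S r) * p_t N b0 (T - S r)) <= Bd cp cu pm r / (pm * pm)).
      { unfold Rdiv. apply Rmult_le_compat_l; auto. apply Rinv_le_contravar. nra.
        apply Rmult_le_compat; lra. }
      simpl. lra. }
    cbn [Vrem]. destruct (xi <=? x)%nat. apply Hq.
    unfold Rmin. destruct (Rle_dec _ _); apply Hq.
Qed.

Lemma V_indep N T a0 b0 xi cp cu r y y' k : (xi <= y)%nat -> (xi <= y')%nat ->
  Vrem N T a0 b0 xi cp cu r y k = Vrem N T a0 b0 xi cp cu r y' k.
Proof. intros Hy Hy'. destruct r; cbn [Vrem]; unfold qval, cost, Defs.ind;
  rewrite (proj2 (Nat.leb_le _ _) Hy), (proj2 (Nat.leb_le _ _) Hy'); reflexivity. Qed.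

Lemma rising_succ r z : rising (r+1) z * r = rising r z * (r + INR z).
Proof. induction z. simpl. ring. cbn [rising]. rewrite S_INR.
  replace (rising (r + 1) z * (r + 1 + INR z) * r) with ((rising (r+1) z * r) * (r + 1 + INR z)) by ring.
  rewrite IHz. ring. Qed.

Lemma pmf_pos r p z : 0 < r -> 0 < p < 1 -> 0 < nb_pmf r p z.
Proof. intros. unfold nb_pmf. repeat apply Rmult_lt_0_compat.
  apply rising_pos; auto. apply Rinv_0_lt_compat, fact_pos. unfold Rpower; apply exp_pos. apply pow_lt; lra. Qed.

Lemma pmf_ratio r p z : 0 < r -> 0 < p < 1 ->
  nb_pmf (r+1) p z = nb_pmf r p z * (p * (1 + INR z * / r)).
Proof. intros. unfold nb_pmf. rewrite Rpower_plus, Rpower_1 by lra.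
  assert (E : rising (r+1) z = rising r z * (r + INR z) / r).
  { rewrite <- rising_succ. field. lra. }
  rewrite E. pose proof (fact_pos z). field. lra. Qed.

Lemma lim_inv a0 : 0 < a0 -> is_lim_seq (fun k => / (a0 + INR k)) 0.
Proof. intros. assert (H1 : is_lim_seq (fun k => a0 + INR k) p_infty).
  { apply (is_lim_seq_plus _ _ a0 p_infty). apply is_lim_seq_const. apply is_lim_seq_INR. simpl. reflexivity. }
  pose proof (is_lim_seq_inv _ _ H1 ltac:(discriminate)) as H2. exact H2. Qed.

Lemma pmf_decay a0 p z : 0 < a0 -> 0 < p < 1 -> is_lim_seq (fun k => nb_pmf (a0 + INR k) p z) 0.
Proof. intros Ha Hp.
  set (a := fun k => nb_pmf (a0 + INR k) p z).
  assert (Hapos : forall k, 0 < a k). { intros k; unfold a; apply pmf_pos; auto. pose proof (pos_INR k); lra. }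
  assert (Hr : forall k, a (S k) / a k = p * (1 + INR z * / (a0 + INR k))).
  { intros k. unfold a. rewrite S_INR. replace (a0 + (INR k + 1)) with ((a0 + INR k) + 1) by ring.
    assert (Hk : 0 < a0 + INR k) by (pose proof (pos_INR k); lra).
    pose proof (pmf_pos (a0+INR k) p z Hk Hp).
    rewrite pmf_ratio by auto. field. lra. }
  assert (Hl : is_lim_seq (fun k => p * (1 + INR z * / (a0 + INR k))) p).
  { pose proof (is_lim_seq_scal_l _ (INR z) _ (lim_inv a0 Ha)) as H1. simpl in H1. rewrite Rmult_0_r in H1.
    pose proof (is_lim_seq_plus' _ _ 1 0 (is_lim_seq_const 1) H1) as H2. rewrite Rplus_0_r in H2.
    pose proof (is_lim_seq_scal_l _ p _ H2) as H3. simpl in H3. rewrite Rmult_1_r in H3. exact H3. }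
  assert (HD : ex_series (fun n => Rabs (a n))).
  { apply (ex_series_DAlembert a p). lra. intros n; specialize (Hapos n); lra.
    apply is_lim_seq_ext with (2 := Hl). intros n. rewrite Hr. rewrite Rabs_pos_eq. reflexivity.
    rewrite <- Hr. apply Rlt_le, Rdiv_lt_0_compat; auto. }
  apply ex_series_lim_0 in HD. apply is_lim_seq_ext with (2 := HD). intros n.
  apply Rabs_pos_eq. apply Rlt_le, Hapos. Qed.

Lemma sum_decay a0 p m : 0 < a0 -> 0 < p < 1 ->
  is_lim_seq (fun k => sum_f_R0 (fun z => nb_pmf (a0 + INR k) p z) m) 0.
Proof. intros Ha Hp. induction m; simpl.
  - apply pmf_decay; auto.
  - pose proof (is_lim_seq_plus' _ _ 0 0 IHm (pmf_decay a0 p (S m) Ha Hp)) as H. rewrite Rplus_0_r in H. exact H.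
Qed.

Lemma eventually_small a0 p m eps : 0 < a0 -> 0 < p < 1 -> 0 < eps ->
  exists K0, forall k, (K0 <= k)%nat -> sum_f_R0 (fun z => nb_pmf (a0 + INR k) p z) m < eps.
Proof. intros Ha Hp He. pose proof (sum_decay a0 p m Ha Hp) as H.
  apply is_lim_seq_spec in H. destruct (H (mkposreal eps He)) as [K0 HK].
  exists K0. intros k Hk. specialize (HK k Hk). simpl in HK. rewrite Rminus_0_r in HK.
  apply Rabs_lt_between in HK. lra. Qed.

Lemma series_finite (a : nat -> R) m : (forall n, (m < n)%nat -> a n = 0) -> Series a = sum_f_R0 a m.
Proof. intros H. apply is_series_unique.
  assert (Hd : forall d, sum_f_R0 a (m + d) = sum_f_R0 a m).
  { induction d. rewrite Nat.add_0_r; auto. rewrite Nat.add_succ_r. simpl. rewrite IHd, H by lia. ring. }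
  change (is_lim_seq (sum_n a) (sum_f_R0 a m)).
  apply is_lim_seq_ext_loc with (u := fun _ => sum_f_R0 a m). exists m. intros n Hn.
  rewrite sum_n_Reals. replace n with (m + (n - m))%nat by lia. rewrite Hd. reflexivity.
  apply is_lim_seq_const. Qed.

Theorem proposition3 (N T : nat) (a0 b0 : R) (xi : nat -> nat) (cp cu : nat -> R) :
  (1 <= N)%nat -> (1 <= T)%nat -> 0 < a0 -> 0 < b0 ->
  (forall i, (1 <= i <= N)%nat -> (1 <= xi i)%nat /\ 0 < cp i /\ cp i < cu i) ->
  forall t i, (t < T)%nat -> (1 <= i <= N)%nat ->
  exists K0 : nat, forall k : nat, (K0 <= k)%nat ->
    forall x : nat, (x < xi i)%nat ->
      ~ optimal N T a0 b0 (xi i) (cp i) (cu i) t x k true.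
Proof.
  intros HN HT Ha Hb Hi t i Ht Hii. destruct (Hi i Hii) as [Hxi [Hcp Hcu]].
  set (xi' := xi i) in *. set (cp' := cp i) in *. set (cu' := cu i) in *.
  set (p := p_t N b0 t). destruct (p_t_bounds N b0 t Hb) as [[Hpm Hpp] Hp1]. fold p in Hpp, Hp1.
  set (pm := b0 / (b0 + 1)) in *. assert (Hp0 : 0 < p) by lra.
  set (Bv := Bd cp' cu' pm (T - (t+1))).
  assert (HBv : 0 <= Bv) by (apply Bd_nonneg; lra).
  set (eps := cp' * p / (Bv + 1)).
  assert (Heps : 0 < eps) by (unfold eps; apply Rdiv_lt_0_compat; [apply Rmult_lt_0_compat|]; lra).
  destruct (eventually_small a0 p (xi' - 1) eps Ha ltac:(lra) Heps) as [K0 HK0].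
  exists K0. intros k Hk x Hx [_ Hopt].
  specialize (Hopt false (or_intror Hx)).
  assert (Hind : Defs.ind xi' x = 0). { unfold Defs.ind. destruct (Nat.leb_spec xi' x); [lia|auto]. }
  unfold qval, cost in Hopt. rewrite Hind in Hopt. simpl aR in Hopt. fold p in Hopt.
  set (Vn := Vt N T a0 b0 xi' cp' cu' (t + 1)) in *.
  set (r1 := a0 + INR k) in *. set (r2 := INR (N - 1) * r1) in *.
  set (f1 := fun z j => Vn z (k + z + j)%nat).
  set (f0 := fun z j => Vn (x + z)%nat (k + z + j)%nat).
  change (1 * (1 - 0) * cp' + 0 * cu' + nb_expect r1 r2 p f1 <= 0 * (1 - 0) * cp' + 0 * cu' + nb_expect r1 r2 p f0) in Hopt.
  assert (Hr1 : 0 <= r1) by (unfold r1; pose proof (pos_INR k); lra).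
  assert (Hr2 : 0 <= r2) by (unfold r2; apply Rmult_le_pos; [apply pos_INR|lra]).
  assert (HVb : forall y k', 0 <= Vn y k' <= Bv).
  { intros. unfold Vn, Vt, Bv. apply V_bound; lra. }
  destruct (expect_bound r1 r2 p f1 Bv Hr1 Hr2 Hp0 Hp1 ltac:(intros; apply HVb)) as [E1 _].
  destruct (expect_bound r1 r2 p f0 Bv Hr1 Hr2 Hp0 Hp1 ltac:(intros; apply HVb)) as [E0 _].
  assert (Hdiff : nb_expect r1 r2 p f0 - nb_expect r1 r2 p f1 =
     sum_f_R0 (fun z => ginner r1 r2 p f0 z - ginner r1 r2 p f1 z) (xi' - 1)).
  { change (Series (ginner r1 r2 p f0) - Series (ginner r1 r2 p f1) = 
       sum_f_R0 (fun z => ginner r1 r2 p f0 z - ginner r1 r2 p f1 z) (xi' - 1)).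
    rewrite <- Series_minus by auto. apply series_finite. intros z Hz.
    unfold ginner. rewrite (Series_ext (fun j => nb_pmf r1 p z * nb_pmf r2 p j * f0 z j)
       (fun j => nb_pmf r1 p z * nb_pmf r2 p j * f1 z j)). ring.
    intros j. unfold f0, f1, Vn, Vt. rewrite (V_indep _ _ _ _ _ _ _ _ (x + z) z); auto; lia. }
  assert (Hsum : sum_f_R0 (fun z => ginner r1 r2 p f0 z - ginner r1 r2 p f1 z) (xi' - 1)
                 <= sum_f_R0 (fun z => nb_pmf r1 p z * (Bv / p)) (xi' - 1)).
  { apply sum_Rle. intros z _.
    destruct (ginner_bound r1 r2 p f0 Bv z Hr1 Hr2 Hp0 Hp1 ltac:(intros; apply HVb)) as [_ [_ U0]].
    destruct (ginner_bound r1 r2 p f1 Bv z Hr1 Hr2 Hp0 Hp1 ltac:(intros; apply HVb)) as [_ [L1 _]].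
    lra. }
  rewrite <- scal_sum in Hsum.
  specialize (HK0 k Hk). fold r1 in HK0.
  assert (Hpos : 0 <= sum_f_R0 (fun z => nb_pmf r1 p z) (xi' - 1)).
  { apply cond_pos_sum. intros; apply nb_pmf_nonneg; auto. }
  assert (H3 : Bv / p * sum_f_R0 (fun z => nb_pmf r1 p z) (xi' - 1) <= Bv / p * eps).
  { apply Rmult_le_compat_l; [|lra]. unfold Rdiv; apply Rmult_le_pos; auto. apply Rlt_le, Rinv_0_lt_compat; lra. }
  assert (H4 : Bv / p * eps = cp' * (Bv / (Bv + 1))) by (unfold eps; field; lra).
  assert (H5 : cp' * (Bv / (Bv + 1)) < cp').
  { assert (Bv / (Bv+1) < 1). { apply (Rmult_lt_reg_r (Bv+1)). lra. unfold Rdiv. rewrite Rmult_assoc, Rinv_l; lra. }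
    nra. }
  change (sum_f_R0 (nb_pmf r1 p) (xi' - 1)) with (sum_f_R0 (fun z => nb_pmf r1 p z) (xi' - 1)) in Hsum. lra.
Qed.
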